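(* Let $(\mathcal{A}, \mathcal{B})$ be a stable cross-intersecting pair of families in $\mathcal{I}_{n, k}^r$. For any $A \in \mathcal{A}$ and $B \in \mathcal{B}$, there is some $i \in [n]$ with $(i, 1) \in A \cap B$.
   Context: $\Gamma_{n,k}$ is the disjoint union of $n$ copies of $K_k$, with vertices $(i,j)$, $i\in[n]$, $j\in[k]$; $\mathcal{I}_{n,k}^r$ is the set of its independent sets of size $r$. For $i\in[n]$, $s\in[2,k]$ and $X\in\mathcal{I}_{n,k}^r$, $P_{i,s}(X)=(X\setminus\{(i,s)\})\cup\{(i,1)\}$ if $(i,s)\in X$ and $P_{i,s}(X)=X$ otherwise; $\pi_{i,s}(\mathcal{F})=\{P_{i,s}(X): X\in\mathcal{F}\}\cup\{X\in\mathcal{F}: P_{i,s}(X)\in\mathcal{F}\}$. A family $\mathcal{F}$ is stable if $\pi_{i,s}(\mathcal{F})=\mathcal{F}$ for all $i\in[n]$, $s\in[2,k]$; a pair is stable if both families are. A pair $(\mathcal{A},\mathcal{B})$ of non-empty families is cross-intersecting if $A\cap B\neq\emptyset$ for all $A\in\mathcal{A},B\in\mathcal{B}$. *)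

(* Defs.v *)
From mathcomp Require Import all_boot.
Set Implicit Arguments. Unset Strict Implicit. Unset Printing Implicit Defensive.

(* Vertices of Gamma_{n,k}: (i, j) with i : 'I_n (copy), j : 'I_k (0-based;
   paper's j = 1 is val j = 0). *)
Definition vtx (n k : nat) := ('I_n * 'I_k)%type.

(* X is independent in the disjoint union of n copies of K_k:
   no two distinct vertices lie in the same copy. *)
Definition indep n k (X : {set vtx n k}) : bool :=
  [forall x in X, forall y in X, (x.1 == y.1) ==> (x == y)].

Definition Ink n k r : {set {set vtx n k}} :=
  [set X | indep X & #|X| == r].

(* the element of 'I_k with value 0 (paper's "1"), built from any s : 'I_k *)
Definition ord_first k (s : 'I_k) : 'I_k :=
  Ordinal (leq_ltn_trans (leq0n s) (ltn_ord s)).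

Definition Pshift n k (i : 'I_n) (s : 'I_k) (X : {set vtx n k}) : {set vtx n k} :=
  if (i, s) \in X then (X :\ (i, s)) :|: [set (i, ord_first s)] else X.

Definition pishift n k (i : 'I_n) (s : 'I_k) (F : {set {set vtx n k}})
  : {set {set vtx n k}} :=
  [set Pshift i s X | X in F] :|: [set X in F | Pshift i s X \in F].

(* stable: invariant under all pi_{i,s}, s in [2,k] (i.e. val s > 0) *)
Definition stable n k (F : {set {set vtx n k}}) : Prop :=
  forall (i : 'I_n) (s : 'I_k), 0 < val s -> pishift i s F = F.

Definition cross_intersecting n k (A B : {set {set vtx n k}}) : Prop :=
  [/\ A != set0, B != set0 &
      forall X Y, X \in A -> Y \in B -> X :&: Y != set0].

(* Main.v *)
Require Import Defs.
From mathcomp Require Import all_boot.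

Lemma stable_closed n k (F : {set {set vtx n k}}) (i : 'I_n) (s : 'I_k) X :
  stable F -> 0 < val s -> X \in F -> Pshift i s X \in F.
Proof.
move=> st s0 XF; rewrite -(st i s s0) /pishift inE; apply/orP; left.
by apply/imsetP; exists X.
Qed.

Lemma key n k (A : {set {set vtx n k}}) (Y : {set vtx n k}) :
  stable A -> indep Y -> (forall X, X \in A -> X :&: Y != set0) ->
  forall m X, #|X :&: Y| <= m -> X \in A ->
  (forall x, x \in X :&: Y -> 0 < val x.2) -> False.
Proof.
move=> st iY hA; elim=> [|m IH] X hc XA hz.
  by move: (hA X XA); rewrite -card_gt0; move: hc; rewrite leqn0 => /eqP ->.
have /set0Pn [[i s] xin] := hA X XA.
have s0 := hz _ xin; rewrite /= in s0.
move: (xin); rewrite inE => /andP [xX xY].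
have sub : Pshift i s X :&: Y \subset (X :&: Y) :\ (i, s).
  apply/subsetP => x; rewrite /Pshift xX !inE => /andP [/orP [/andP [ne xX'] | /eqP ->] xY'].
    by rewrite ne xX' xY'.
  move/forallP: iY => /(_ (i, ord_first s)) /implyP H.
  exfalso; move: (H xY') => /forallP /(_ (i, s)) /implyP /(_ xY).
  rewrite eqxx /= => /eqP [] /(congr1 val) /= => e; by rewrite -e in s0.
apply: (IH (Pshift i s X)).
- apply: leq_trans (subset_leq_card sub) _.
  by move: hc; rewrite (cardsD1 (i, s)) xin.
- exact: stable_closed.
- move=> x /(subsetP sub); rewrite inE => /andP [_]; exact: hz.
Qed.

Theorem lemma4p2 (n k r : nat) (A B : {set {set vtx n k}}) :
  A \subset Ink n k r -> B \subset Ink n k r ->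
  stable A -> stable B -> cross_intersecting A B ->
  forall X Y, X \in A -> Y \in B ->
  exists (i : 'I_n) (j : 'I_k), val j = 0 /\ (i, j) \in X :&: Y.
Proof.
move=> _ sB stA _ [_ _ hc] X Y XA YB.
have iY : indep Y by move: (subsetP sB Y YB); rewrite inE => /andP [].
case: (boolP [exists x in X :&: Y, val x.2 == 0]).
  by move=> /existsP [[i j] /andP [h /eqP e]]; exists i, j.
rewrite negb_exists_in => /forall_inP H.
exfalso; apply: (@key _ _ A Y stA iY (fun Z ZA => hc Z Y ZA YB) _ X (leqnn _) XA).
by move=> x /H; rewrite lt0n.
Qed.
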